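(* Let $\alpha\in(1,\infty)$, let $p_X$ be a distribution on a finite set $\mathcal X$ and $p_{Y\mid X}$ a channel to a finite set $\mathcal Y$. Let $\tilde q^{(0)}_{Y\mid X}$ be an initial channel and, for $k\ge0$, define $$r^{(k)}_{X\mid Y}(x\mid y)=\frac{p_X(x)\tilde q^{(k)}_{Y\mid X}(y\mid x)}{\sum_{x'}p_X(x')\tilde q^{(k)}_{Y\mid X}(y\mid x')},\qquad \tilde q^{(k+1)}_{Y\mid X}(y\mid x)=\frac{p_{Y\mid X}(y\mid x)r^{(k)}_{X\mid Y}(x\mid y)^{1-1/\alpha}}{\sum_{y'}p_{Y\mid X}(y'\mid x)r^{(k)}_{X\mid Y}(x\mid y')^{1-1/\alpha}}.$$ Then $$\tilde F_\alpha^{\mathrm C}(\tilde q^{(0)}_{Y\mid X},r^{(0)}_{X\mid Y})\le\tilde F_\alpha^{\mathrm C}(\tilde q^{(1)}_{Y\mid X},r^{(0)}_{X\mid Y})\le\cdots\le\tilde F_\alpha^{\mathrm C}(\tilde q^{(k)}_{Y\mid X},r^{(k)}_{X\mid Y})\le\tilde F_\alpha^{\mathrm C}(\tilde q^{(k+1)}_{Y\mid X},r^{(k)}_{X\mid Y})\le\cdots\le I_\alpha^{\mathrm C}(X;Y).$$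
   Context: $\log$ is natural, $D$ is the Kullback–Leibler divergence, and $D_\alpha(p\|q):=\frac{1}{\alpha-1}\log\sum_zp(z)^\alpha q(z)^{1-\alpha}$ is the Rényi divergence. The Augustin–Csiszár mutual information is $I_\alpha^{\mathrm C}(X;Y):=\min_{q_Y}\sum_xp_X(x)D_\alpha(p_{Y\mid X}(\cdot\mid x)\|q_Y)$. For a channel $\tilde q_{Y\mid X}$ and a reverse channel $r_{X\mid Y}$ (a family of distributions $r_{X\mid Y}(\cdot\mid y)$ on $\mathcal X$), $\tilde F_\alpha^{\mathrm C}(\tilde q_{Y\mid X},r_{X\mid Y}):=\frac{\alpha}{1-\alpha}D(p_X\tilde q_{Y\mid X}\|p_Xp_{Y\mid X})+\mathbb E^{p_X\tilde q_{Y\mid X}}[\log\frac{r_{X\mid Y}(X\mid Y)}{p_X(X)}]$. *)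

(* Defs.v *)
From HB Require Import structures.
From mathcomp Require Import all_boot all_order all_algebra.
From mathcomp Require Import all_classical all_reals.
From mathcomp Require Import ereal exp.
Set Implicit Arguments. Unset Strict Implicit. Unset Printing Implicit Defensive.
Import Order.TTheory GRing.Theory Num.Theory.
Local Open Scope ring_scope.
Local Open Scope ereal_scope.

Section Defs.
Variable R : realType.

Definition is_dist (T : finType) (p : T -> R) : Prop :=
  (forall t, (0 <= p t)%R) /\ (\sum_(t : T) p t = 1)%R.

(* a channel W : X -> Y -> R, W x y = W(y|x) *)
Definition is_channel (X Y : finType) (W : X -> Y -> R) : Prop :=
  forall x, is_dist (W x).

Definition KL (T : finType) (p q : T -> R) : \bar R :=
  \sum_(t : T)
    (if p t == 0%R then 0
     else if q t == 0%R then +oo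
     else ((p t) * ln (p t / q t))%:E).

Definition renyi_div (a : R) (T : finType) (p q : T -> R) : \bar R :=
  if `[< exists t, (0 < p t)%R /\ q t = 0%R >] then +oo
  else ((a - 1)^-1 * ln (\sum_(t : T) (p t `^ a * q t `^ (1 - a))))%:E.

(* Augustin-Csiszar mutual information I_a^C(X;Y) = min_{q_Y} sum_x p_X(x) D_a(p_{Y|X}(.|x) || q_Y)
   (the min is written as an infimum over all distributions q_Y on Y) *)
Definition augustin_csiszar_MI (a : R) (X Y : finType) (pX : X -> R)
    (pYX : X -> Y -> R) : \bar R :=
  ereal_inf [set \sum_(x : X) ((pX x)%:E * renyi_div a (pYX x) qY)
            | qY in [set qY : Y -> R | is_dist qY]].

Definition joint (X Y : finType) (pX : X -> R) (W : X -> Y -> R) : X * Y -> R :=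
  fun z => (pX z.1 * W z.1 z.2)%R.

(* E^{p_X q}[ log (r(X|Y) / p_X(X)) ], with 0 * log(.) = 0 and
   c * log 0 = -oo for c > 0; r x y = r(x|y) *)
Definition exp_log_ratio (X Y : finType) (pX : X -> R) (q : X -> Y -> R)
    (r : X -> Y -> R) : \bar R :=
  \sum_(z : X * Y)
    (if joint pX q z == 0%R then 0
     else if r z.1 z.2 == 0%R then -oo
     else (joint pX q z * ln (r z.1 z.2 / pX z.1))%:E).

Definition FC (a : R) (X Y : finType) (pX : X -> R) (pYX : X -> Y -> R)
    (q : X -> Y -> R) (r : X -> Y -> R) : \bar R :=
  ((a / (1 - a))%:E * KL (joint pX q) (joint pX pYX)) + exp_log_ratio pX q r.

Definition r_of (X Y : finType) (pX : X -> R) (q : X -> Y -> R) : X -> Y -> R :=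
  fun x y => (pX x * q x y / \sum_(x' : X) pX x' * q x' y)%R.

Definition q_next (a : R) (X Y : finType) (pYX : X -> Y -> R) (r : X -> Y -> R)
    : X -> Y -> R :=
  fun x y => (pYX x y * r x y `^ (1 - a^-1) /
              \sum_(y' : Y) pYX x y' * r x y' `^ (1 - a^-1))%R.

Fixpoint q_iter (a : R) (X Y : finType) (pX : X -> R) (pYX : X -> Y -> R)
    (q0 : X -> Y -> R) (k : nat) : X -> Y -> R :=
  match k with
  | O => q0
  | S k' => q_next a pYX (r_of pX (q_iter a pX pYX q0 k'))
  end.

End Defs.

(* Main.v *)
Require Import Defs.
From HB Require Import structures.
From mathcomp Require Import all_boot all_order all_algebra.
From mathcomp Require Import all_classical all_reals.
From mathcomp Require Import ereal exp.
From mathcomp Require Import ring lra.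
Import Order.TTheory GRing.Theory Num.Theory.
Local Open Scope ring_scope.
Local Open Scope ereal_scope.

Set Implicit Arguments. Unset Strict Implicit.

Local Close Scope ereal_scope.

Lemma ln_le_sub1 (R : realType) (c : R) : 0 < c -> ln c <= c - 1.
Proof.
move=> c0; have := @le_ln1Dx R (c - 1); rewrite addrCA subrr addr0; apply; lra.
Qed.

Lemma logsum (R : realType) (T : finType) (q u : T -> R) :
 (forall t, 0 <= q t) -> (forall t, 0 <= u t) -> (forall t, q t != 0 -> 0 < u t) ->
 0 < \sum_t q t ->
 \sum_t (if q t == 0 then 0 else q t * ln (u t / q t))
   <= (\sum_t q t) * ln ((\sum_t u t) / \sum_t q t).
Proof.
move=> q0 u0 qu Q0.
set Q := \sum_t q t; set U := \sum_t u t.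
have U0 : 0 < U.
  have [t qt] : exists t, q t != 0.
    apply/existsP; rewrite -negb_forall; apply/negP => /forallP H.
    by move: Q0; rewrite /Q big1 ?ltxx // => t _; apply/eqP.
  apply: (lt_le_trans (qu t qt)); rewrite /U (bigD1 t) //= lerDl.
  by apply: sumr_ge0.
apply: (le_trans (y := \sum_t (q t * ln (U / Q) + (u t * Q / U - q t)))).
  apply: ler_sum => t _; case: ifPn => [/eqP ->|qt].
    rewrite mul0r subr0 add0r; apply: mulr_ge0; [apply: mulr_ge0 => //; exact: ltW|].
    by rewrite invr_ge0 ltW.
  have qt0 : 0 < q t by rewrite lt_neqAle eq_sym qt q0.
  have ut0 := qu t qt.
  set c := (u t / q t) / (U / Q).
  have c0 : 0 < c by rewrite /c !divr_gt0.
  have -> : u t / q t = (U / Q) * c by rewrite /c mulrCA mulfV ?mulr1 // gt_eqF // divr_gt0.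
  rewrite lnM ?posrE ?divr_gt0 // mulrDr lerD2l.
  apply: (le_trans (y := q t * (c - 1))); first by rewrite ler_pM2l // ln_le_sub1.
  rewrite le_eqVlt; apply/orP; left; apply/eqP; rewrite /c.
  field; rewrite ?gt_eqF //.
have -> : \sum_t (q t * ln (U / Q) + (u t * Q / U - q t)) = Q * ln (U / Q).
  rewrite big_split /= -mulr_suml -/Q big_split /= sumrN -mulr_suml -mulr_suml -/U.
  by rewrite mulrAC divff ?gt_eqF // mul1r subrr addr0.
by [].
Qed.

Definition Aterm (R : realType) (a : R) (X Y : finType) (p : X -> R) (W q r : X -> Y -> R)
  (x : X) (y : Y) : R :=
  if q x y == 0 then 0 else q x y * (a / (1 - a) * ln (q x y / W x y) + ln (r x y / p x)).

Definition A (R : realType) (a : R) (X Y : finType) (p : X -> R) (W q r : X -> Y -> R)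
  (x : X) : R := \sum_y Aterm a p W q r x y.

Lemma A_rw (R : realType) (a : R) (X Y : finType) (p : X -> R) (W q r : X -> Y -> R) x :
  1 < a -> 0 < p x ->
  (forall y, q x y != 0 -> [/\ 0 < q x y, 0 < W x y & 0 < r x y]) ->
  A a p W q r x = - (a / (1 - a)) *
     \sum_y (if q x y == 0 then 0 else q x y * ln (W x y * r x y `^ (1 - a^-1) / q x y))
     - (\sum_y q x y) * ln (p x).
Proof.
move=> a1 px H.
rewrite /A mulr_sumr mulr_suml -sumrB; apply: eq_bigr => y _.
rewrite /Aterm; case: ifPn => [/eqP ->|qy]; first by rewrite mulr0 mul0r subr0.
have [q0 W0 r0] := H y qy.
have rb0 : 0 < r x y `^ (1 - a^-1) by apply: powR_gt0.
rewrite !ln_div ?posrE ?mulr_gt0 // lnM ?posrE // ln_powR.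
have a0 : a != 0 by apply/negP => /eqP a0; lra.
have a10 : 1 - a != 0 by apply/negP => /eqP a10; lra.
field.
by rewrite a10 a0.
Qed.

Lemma A_qstep (R : realType) (a : R) (X Y : finType) (p : X -> R) (W q r : X -> Y -> R) x :
  1 < a -> 0 < p x -> (forall y, 0 <= W x y) -> (forall y, 0 <= r x y) ->
  (forall y, 0 <= q x y) -> \sum_y q x y = 1 ->
  (forall y, q x y != 0 -> W x y != 0 /\ r x y != 0) ->
  0 < \sum_y W x y * r x y `^ (1 - a^-1) ->
  A a p W q r x <= A a p W (q_next a W r) r x.
Proof.
move=> a1 px W0 r0 q0 q1 qg Z0.
set u := fun y => W x y * r x y `^ (1 - a^-1).
set Z := \sum_y W x y * r x y `^ (1 - a^-1).
have u0 y : 0 <= u y by rewrite /u mulr_ge0 // powR_ge0.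
have b0 : 1 - a^-1 != 0.
  apply/negP => /eqP h; have : a^-1 = 1 by lra.
  by move/(congr1 GRing.inv); rewrite invrK invr1 => h'; lra.
have qn y : q_next a W r x y = u y / Z by [].
have qnpos y : q_next a W r x y != 0 -> [/\ 0 < q_next a W r x y, 0 < W x y & 0 < r x y].
  rewrite qn mulf_eq0 negb_or invr_eq0 => /andP[uy _].
  move: uy; rewrite /u mulf_eq0 negb_or => /andP[Wy ry].
  have Wp : 0 < W x y by rewrite lt_neqAle eq_sym Wy W0.
  have rp : 0 < r x y.
    rewrite lt_neqAle r0 andbT eq_sym; apply/negP => /eqP rz.
    by move: ry; rewrite rz powR0 ?eqxx.
  by split => //; rewrite divr_gt0 // /u mulr_gt0 // powR_gt0.
have qpos y : q x y != 0 -> [/\ 0 < q x y, 0 < W x y & 0 < r x y].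
  move=> qy; have [Wy ry] := qg y qy.
  by split; rewrite lt_neqAle eq_sym ?qy ?Wy ?ry ?q0 ?W0 ?r0.
have qs1 : \sum_y q_next a W r x y = 1.
  under eq_bigr do rewrite qn.
  by rewrite -mulr_suml divff // gt_eqF.
rewrite (A_rw a1 px qpos) (A_rw a1 px qnpos) q1 qs1.
have -> : \sum_y (if q_next a W r x y == 0 then 0 else
     q_next a W r x y * ln (W x y * r x y `^ (1 - a^-1) / q_next a W r x y)) = ln Z.
  transitivity (\sum_y q_next a W r x y * ln Z); last by rewrite -mulr_suml qs1 mul1r.
  apply: eq_bigr => y _.
  case: ifPn => [/eqP -> //|qy]; first by rewrite mul0r.
  congr (_ * ln _); rewrite qn -/(u y).
  have uy : u y != 0 by move: qy; rewrite qn mulf_eq0 negb_or => /andP[].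
  by rewrite invf_div mulrA mulrC mulrA mulVf // mul1r.
rewrite lerD2r; rewrite ler_pM2l; last first.
  by rewrite oppr_gt0 pmulr_rlt0 ?invr_lt0; lra.
have := logsum q0 u0 (fun y qy => let: And3 _ Wp rp := qpos y qy in
   mulr_gt0 Wp (powR_gt0 _ rp)).
rewrite q1 divr1 mul1r; apply; exact: ltr01.
Qed.

Lemma A_D (R : realType) (a : R) (X Y : finType) (p : X -> R) (W q r : X -> Y -> R)
  (Q : Y -> R) x :
  1 < a -> 0 < p x -> (forall y, 0 <= W x y) -> (forall y, 0 <= r x y) ->
  (forall y, 0 <= Q y) ->
  (forall y, 0 <= q x y) -> \sum_y q x y = 1 ->
  (forall y, q x y != 0 -> W x y != 0 /\ r x y != 0) ->
  (forall y, 0 < W x y -> 0 < Q y) ->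
  A a p W q r x <= (a - 1)^-1 * ln (\sum_y W x y `^ a * Q y `^ (1 - a))
                   + ln (\sum_y Q y * r x y / p x).
Proof.
move=> a1 px W0 r0 Q0 q0 q1 qg WQ.
have qpos y : q x y != 0 -> [/\ 0 < q x y, 0 < W x y & 0 < r x y].
  move=> qy; have [Wy ry] := qg y qy.
  by split; rewrite lt_neqAle eq_sym ?qy ?Wy ?ry ?q0 ?W0 ?r0.
set v := fun y => W x y `^ a * Q y `^ (1 - a).
set w := fun y => Q y * r x y / p x.
have v0 y : 0 <= v y by rewrite /v mulr_ge0 // powR_ge0.
have w0 y : 0 <= w y by rewrite /w !mulr_ge0 // invr_ge0 ltW.
have a0 : a - 1 != 0 by apply/negP => /eqP h; lra.
have a10 : 1 - a != 0 by apply/negP => /eqP h; lra.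
have -> : A a p W q r x = (a - 1)^-1 *
    \sum_y (if q x y == 0 then 0 else q x y * ln (v y / q x y)) +
    \sum_y (if q x y == 0 then 0 else q x y * ln (w y / q x y)).
  rewrite /A mulr_sumr -big_split; apply: eq_bigr => y _ /=.
  rewrite /Aterm; case: ifPn => [_|qy]; first by rewrite /= mulr0 addr0.
  have [qp Wp rp] := qpos y qy.
  have Qp := WQ y Wp.
  rewrite /v /w !ln_div ?posrE ?mulr_gt0 ?invr_gt0 ?powR_gt0 // !lnM ?posrE ?powR_gt0 //
     ?mulr_gt0 ?invr_gt0 // !ln_powR.
  field; by rewrite a0 a10.
have vp y : q x y != 0 -> 0 < v y.
  by move=> /qpos[_ Wp _]; rewrite /v mulr_gt0 // powR_gt0 // WQ.
have wp y : q x y != 0 -> 0 < w y.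
  by move=> /qpos[_ Wp rp]; rewrite /w !mulr_gt0 // ?invr_gt0 // WQ.
have := logsum q0 v0 vp; have := logsum q0 w0 wp.
rewrite q1 !divr1 !mul1r => /(_ ltr01) h1 /(_ ltr01) h2.
apply: lerD => //; apply: ler_wpM2l => //.
rewrite invr_ge0; lra.
Qed.

Lemma sum_ex_neq0 (R : realType) (T : finType) (f : T -> R) :
  \sum_t f t != 0 -> exists t, f t != 0.
Proof.
move=> h; apply/existsP; rewrite -negb_forall; apply/negP => /forallP H.
by move: h; rewrite big1 ?eqxx // => t _; apply/eqP.
Qed.

Lemma sum_A_D (R : realType) (a : R) (X Y : finType) (p : X -> R) (W q r : X -> Y -> R)
  (Q : Y -> R) :
  1 < a -> (forall x, 0 <= p x) -> \sum_x p x = 1 ->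
  (forall x y, 0 <= W x y) -> (forall x y, 0 <= r x y) ->
  (forall y, 0 <= Q y) -> \sum_y Q y = 1 -> (forall y, \sum_x r x y <= 1) ->
  (forall x y, 0 <= q x y) -> (forall x, 0 < p x -> \sum_y q x y = 1) ->
  (forall x y, 0 < p x -> q x y != 0 -> W x y != 0 /\ r x y != 0) ->
  (forall x y, 0 < p x -> 0 < W x y -> 0 < Q y) ->
  \sum_x p x * A a p W q r x <=
  \sum_x p x * ((a - 1)^-1 * ln (\sum_y W x y `^ a * Q y `^ (1 - a))).
Proof.
move=> a1 p0 p1 W0 r0 Q0 Q1 rs1 q0 q1 qg WQ.
set u := fun x => \sum_y Q y * r x y.
have u0 x : 0 <= u x by rewrite /u sumr_ge0 // => y _; rewrite mulr_ge0.
have up x : p x != 0 -> 0 < u x.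
  move=> px; have pp : 0 < p x by rewrite lt_neqAle eq_sym px p0.
  have [y qy] : exists y, q x y != 0 by apply: sum_ex_neq0; rewrite q1 // oner_neq0.
  have [Wy ry] := qg x y pp qy.
  have Wp : 0 < W x y by rewrite lt_neqAle eq_sym Wy W0.
  have rp : 0 < r x y by rewrite lt_neqAle eq_sym ry r0.
  apply: (lt_le_trans (y := Q y * r x y)); first by rewrite mulr_gt0 // (WQ x).
  rewrite /u (bigD1 y) //= lerDl sumr_ge0 // => y' _; exact: mulr_ge0.
apply: (le_trans (y := \sum_x (p x * ((a - 1)^-1 * ln (\sum_y W x y `^ a * Q y `^ (1 - a)))
    + (if p x == 0 then 0 else p x * ln (u x / p x))))).
  apply: ler_sum => x _; case: ifPn => [/eqP ->|px]; first by rewrite !mul0r addr0.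
  have pp : 0 < p x by rewrite lt_neqAle eq_sym px p0.
  rewrite -mulrDr ler_pM2l //.
  have -> : u x / p x = \sum_y Q y * r x y / p x by rewrite /u mulr_suml.
  exact: (A_D a1 pp (W0 x) (r0 x) Q0 (q0 x) (q1 x pp) (fun y => qg x y pp) (fun y => WQ x y pp)).
rewrite big_split /= gerDl.
have := logsum p0 u0 up; rewrite p1 divr1 mul1r => /(_ ltr01) h.
apply: (le_trans h); apply: ln_le0.
rewrite /u exchange_big /=.
apply: (le_trans (y := \sum_y Q y)); last by rewrite Q1.
apply: ler_sum => y _; rewrite -mulr_sumr.
by rewrite -[leRHS]mulr1 ler_wpM2l.
Qed.

Lemma sum_A_rstep (R : realType) (a : R) (X Y : finType) (p : X -> R) (W q r : X -> Y -> R) :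
  (forall x, 0 <= p x) -> (forall x y, 0 <= q x y) -> (forall x y, 0 <= r x y) ->
  (forall y, \sum_x r x y <= 1) ->
  (forall x y, p x != 0 -> q x y != 0 -> r x y != 0) ->
  \sum_x p x * A a p W q r x <= \sum_x p x * A a p W q (r_of p q) x.
Proof.
move=> p0 q0 r0 rs1 rg.
rewrite -subr_le0 -sumrB.
rewrite (eq_bigr (fun x => \sum_y (p x * Aterm a p W q r x y - p x * Aterm a p W q (r_of p q) x y)));
  last by move=> x _; rewrite /A !mulr_sumr -sumrB.
rewrite exchange_big /=; apply: sumr_le0 => y _.
set J := fun x => p x * q x y.
set S := \sum_x J x.
have J0 x : 0 <= J x by rewrite /J mulr_ge0.
have S0 : 0 <= S by rewrite sumr_ge0.
rewrite (eq_bigr (fun x => (if J x == 0 then 0 else J x * ln (r x y / J x)) + J x * ln S)); last first.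
  move=> x _; rewrite /J /Aterm.
  have [->|px] := eqVneq (p x) 0; first by rewrite !mul0r eqxx subrr add0r.
  have [->|qy] := eqVneq (q x y) 0.
    by rewrite !mulr0 eqxx mul0r subrr addr0.
  have pp : 0 < p x by rewrite lt_neqAle eq_sym px p0.
  have qp : 0 < q x y by rewrite lt_neqAle eq_sym qy q0.
  have rp : 0 < r x y by rewrite lt_neqAle eq_sym (rg x y px qy) r0.
  have Jp : 0 < p x * q x y by rewrite mulr_gt0.
  have Sp : 0 < S.
    apply: (lt_le_trans Jp); rewrite /S (bigD1 x) //= lerDl sumr_ge0 // => x' _.
  rewrite mulf_eq0 (negbTE px) (negbTE qy) /= /r_of -/S.
  have e1 : ln (r x y / p x) = ln (r x y) - ln (p x) by rewrite ln_div ?posrE.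
  have e2 : ln (p x * q x y / S / p x) = ln (p x * q x y) - ln S - ln (p x).
    by rewrite !ln_div ?posrE ?divr_gt0.
  have e3 : ln (r x y / (p x * q x y)) = ln (r x y) - ln (p x * q x y).
    by rewrite ln_div ?posrE.
  rewrite e1 e2 e3; ring.
rewrite big_split /= -mulr_suml -/S.
have [S00|Sn0] := eqVneq S 0.
  rewrite S00 mul0r addr0 big1 // => x _.
  have /eqP -> : J x == 0.
    by move/eqP: S00; rewrite /S psumr_eq0 // => /allP /(_ x (mem_index_enum x)).
  by rewrite eqxx.
have Sp : 0 < S by rewrite lt_neqAle eq_sym Sn0 S0.
have [x Jx] : exists x, J x != 0 by apply: sum_ex_neq0.
have rp : 0 < r x y.
  move: Jx; rewrite /J mulf_eq0 negb_or => /andP[px qy].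
  by rewrite lt_neqAle eq_sym (rg x y px qy) r0.
have rsp : 0 < \sum_x r x y.
  apply: (lt_le_trans rp); rewrite (bigD1 x) //= lerDl sumr_ge0 // => x' _.
have := @logsum R X J (fun x => r x y) J0 (fun x => r0 x y).
have rpos x' : J x' != 0 -> 0 < r x' y.
  move=> h; move: h; rewrite /J mulf_eq0 negb_or => /andP[px qy].
  by rewrite lt_neqAle eq_sym (rg x' y px qy) r0.
move=> /(_ rpos Sp) h.
apply: (le_trans (lerD h (lexx (S * ln S)))).
rewrite ln_div ?posrE // mulrBr subrK.
by rewrite pmulr_rle0 // ln_le0.
Qed.
Local Open Scope ereal_scope.

Lemma FC_good (R : realType) (a : R) (X Y : finType) (p : X -> R) (W q r : X -> Y -> R) :
  (forall x y, p x != 0%R -> q x y != 0%R -> W x y != 0%R /\ r x y != 0%R) ->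
  FC a p W q r = (\sum_x p x * A a p W q r x)%R%:E.
Proof.
move=> H.
rewrite /FC /KL /exp_log_ratio.
rewrite (eq_bigr (fun z => (if joint p q z == 0%R then 0%R
   else joint p q z * ln (joint p q z / joint p W z))%R%:E)); last first.
  move=> [x y] _; rewrite /joint /=; case: ifPn => // J.
  have /andP[px qy] : (p x != 0%R) && (q x y != 0%R) by rewrite -negb_or -mulf_eq0.
  have [Wy _] := H x y px qy.
  by rewrite mulf_eq0 (negbTE px) (negbTE Wy).
rewrite [X in _ + X](eq_bigr (fun z => (if joint p q z == 0%R then 0%R
   else joint p q z * ln (r z.1 z.2 / p z.1))%R%:E)); last first.
  move=> [x y] _; rewrite /joint /=; case: ifPn => // J.
  have /andP[px qy] : (p x != 0%R) && (q x y != 0%R) by rewrite -negb_or -mulf_eq0.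
  have [_ ry] := H x y px qy.
  by rewrite (negbTE ry).
rewrite !sumEFin -EFinM -EFinD; congr EFin.
rewrite mulr_sumr -big_split /=.
rewrite (eq_bigr (fun x => \sum_y p x * Aterm a p W q r x y)%R); last first.
  by move=> x _; rewrite /A mulr_sumr.
rewrite pair_big /=; apply: eq_bigr => [[x y]] _ /=.
rewrite /joint /Aterm /=.
have [->|px] := eqVneq (p x) 0%R; first by rewrite !mul0r eqxx mulr0 addr0.
have [->|qy] := eqVneq (q x y) 0%R; first by rewrite !mulr0 eqxx mulr0 addr0.
rewrite mulf_eq0 (negbTE px) (negbTE qy) /=.
rewrite -mulf_div divff // mul1r.
ring.
Qed.

Lemma FC_bad (R : realType) (a : R) (X Y : finType) (p : X -> R) (W q r : X -> Y -> R) x y :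
  (1 < a)%R -> p x != 0%R -> q x y != 0%R -> W x y = 0%R -> FC a p W q r = -oo.
Proof.
move=> a1 px qy Wy; rewrite /FC.
have -> : KL (joint p q) (joint p W) = +oo.
  apply/eqP; rewrite esum_eqy.
    apply/existsP; exists (x, y); rewrite /joint /= mulf_eq0 (negbTE px) (negbTE qy) /= Wy mulr0 eqxx.
    by [].
  move=> [x' y'] _; rewrite /joint /=.
  by case: ifPn => // _; case: ifPn.
rewrite lt0_muley ?addNye //.
rewrite lte_fin pmulr_rlt0 ?invr_lt0; lra.
Qed.
Local Close Scope ereal_scope.

Lemma r_of_ge0 (R : realType) (X Y : finType) (p : X -> R) (q : X -> Y -> R) :
  (forall x, 0 <= p x) -> (forall x y, 0 <= q x y) -> forall x y, 0 <= r_of p q x y.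
Proof.
move=> p0 q0 x y; rewrite /r_of divr_ge0 ?mulr_ge0 // sumr_ge0 // => x' _.
exact: mulr_ge0.
Qed.

Lemma r_of_sum (R : realType) (X Y : finType) (p : X -> R) (q : X -> Y -> R) :
  (forall x, 0 <= p x) -> (forall x y, 0 <= q x y) -> forall y, \sum_x r_of p q x y <= 1.
Proof.
move=> p0 q0 y; rewrite /r_of -mulr_suml.
have [->|S0] := eqVneq (\sum_x p x * q x y) 0; first by rewrite mul0r ler01.
by rewrite divff.
Qed.

Lemma r_of_neq0 (R : realType) (X Y : finType) (p : X -> R) (q : X -> Y -> R) x y :
  (forall x, 0 <= p x) -> (forall x y, 0 <= q x y) -> p x != 0 -> q x y != 0 ->
  r_of p q x y != 0.
Proof.
move=> p0 q0 px qy.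
have Jp : 0 < p x * q x y.
  by rewrite mulr_gt0 // lt_neqAle eq_sym ?px ?qy ?p0 ?q0.
rewrite /r_of gt_eqF // divr_gt0 //.
apply: (lt_le_trans Jp); rewrite (bigD1 x) //= lerDl sumr_ge0 // => x' _.
exact: mulr_ge0.
Qed.

Lemma q_next_ge0 (R : realType) (a : R) (X Y : finType) (W r : X -> Y -> R) :
  (forall x y, 0 <= W x y) -> forall x y, 0 <= q_next a W r x y.
Proof.
move=> W0 x y; rewrite /q_next divr_ge0 ?mulr_ge0 ?powR_ge0 // sumr_ge0 // => y' _.
by rewrite mulr_ge0 ?powR_ge0.
Qed.

Lemma q_next_good (R : realType) (a : R) (X Y : finType) (W r : X -> Y -> R) x y :
  1 < a -> q_next a W r x y != 0 -> W x y != 0 /\ r x y != 0.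
Proof.
move=> a1; rewrite /q_next mulf_eq0 negb_or => /andP[+ _].
rewrite mulf_eq0 negb_or => /andP[Wy ry]; split => //.
apply/negP => /eqP rz; move: ry; rewrite rz powR0 ?eqxx //.
apply/negP => /eqP h; have : a^-1 = 1 by lra.
by move/(congr1 GRing.inv); rewrite invrK invr1 => h'; lra.
Qed.

Definition InvQ (R : realType) (X Y : finType) (p : X -> R) (W q : X -> Y -> R) :=
  (forall x y, 0 <= q x y) /\
  (forall x, 0 < p x -> \sum_y q x y = 1 /\ exists y, 0 < W x y /\ 0 < q x y).

Lemma Z_pos (R : realType) (a : R) (X Y : finType) (p : X -> R) (W q : X -> Y -> R) x :
  (forall x, 0 <= p x) -> (forall x y, 0 <= W x y) -> InvQ p W q -> 0 < p x ->
  0 < \sum_y W x y * r_of p q x y `^ (1 - a^-1).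
Proof.
move=> p0 W0 [q0 Hq] px; have [_ [y [Wy qy]]] := Hq x px.
have ry : 0 < r_of p q x y.
  by rewrite lt_neqAle eq_sym r_of_neq0 ?gt_eqF ?r_of_ge0.
apply: (lt_le_trans (y := W x y * r_of p q x y `^ (1 - a^-1))).
  by rewrite mulr_gt0 // powR_gt0.
rewrite (bigD1 y) //= lerDl sumr_ge0 // => y' _.
by rewrite mulr_ge0 ?powR_ge0.
Qed.

Lemma inv_next (R : realType) (a : R) (X Y : finType) (p : X -> R) (W q : X -> Y -> R) :
  (forall x, 0 <= p x) -> (forall x y, 0 <= W x y) -> InvQ p W q ->
  InvQ p W (q_next a W (r_of p q)).
Proof.
move=> p0 W0 Iq; split; first exact: q_next_ge0.
move=> x px; have Z0 := Z_pos a p0 W0 Iq px.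
split.
  rewrite /q_next -mulr_suml divff // gt_eqF //.
have [q0 Hq] := Iq; have [_ [y [Wy qy]]] := Hq x px.
exists y; split => //.
have ry : 0 < r_of p q x y.
  by rewrite lt_neqAle eq_sym r_of_neq0 ?gt_eqF ?r_of_ge0.
by rewrite /q_next divr_gt0 // mulr_gt0 // powR_gt0.
Qed.

Lemma inv_iter (R : realType) (a : R) (X Y : finType) (p : X -> R) (W q0 : X -> Y -> R) k :
  (forall x, 0 <= p x) -> (forall x y, 0 <= W x y) -> InvQ p W q0 ->
  InvQ p W (q_iter a p W q0 k).
Proof.
move=> p0 W0 I0; elim: k => [//|k IH] /=.
exact: inv_next.
Qed.
Local Open Scope ereal_scope.

Theorem lemma3 (R : realType) (a : R) (X Y : finType) (pX : X -> R)
    (pYX : X -> Y -> R) (q0 : X -> Y -> R) :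
  (1 < a)%R ->
  is_dist pX -> is_channel pYX -> is_channel q0 ->
  (* well-definedness of q^{(1)} on the support of p_X *)
  (forall x, (0 < pX x)%R -> exists y, (0 < pYX x y)%R /\ (0 < q0 x y)%R) ->
  forall k : nat,
    let qk := q_iter a pX pYX q0 k in
    let qk1 := q_iter a pX pYX q0 k.+1 in
    [/\ FC a pX pYX qk (r_of pX qk) <= FC a pX pYX qk1 (r_of pX qk),
        FC a pX pYX qk1 (r_of pX qk) <= FC a pX pYX qk1 (r_of pX qk1),
        FC a pX pYX qk (r_of pX qk) <= augustin_csiszar_MI a pX pYX &
        FC a pX pYX qk1 (r_of pX qk) <= augustin_csiszar_MI a pX pYX].
Proof.
move=> a1 [p0 p1] Wc q0c Hex k qk qk1.
have W0 x y : (0 <= pYX x y)%R by have [] := Wc x.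
have I0 : InvQ pX pYX q0.
  split; first by move=> x y; have [] := q0c x.
  move=> x px; split; first by have [] := q0c x.
  exact: Hex.
have Ik : InvQ pX pYX qk := inv_iter a k p0 W0 I0.
have [qk0 Hqk] := Ik.
have qk1E : qk1 = q_next a pYX (r_of pX qk) by [].
have Ik1 : InvQ pX pYX qk1 by rewrite qk1E; exact: inv_next.
have [qk10 Hqk1] := Ik1.
set rk := r_of pX qk.
set rk1 := r_of pX qk1.
have rk0 := r_of_ge0 p0 qk0.
have rks := r_of_sum p0 qk0.
have good1 x y : pX x != 0%R -> qk1 x y != 0%R -> pYX x y != 0%R /\ rk x y != 0%R.
  by move=> _; rewrite qk1E; apply: q_next_good.
have good2 x y : pX x != 0%R -> qk1 x y != 0%R -> pYX x y != 0%R /\ rk1 x y != 0%R.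
  move=> px qy; split; first by have [] := good1 x y px qy.
  exact: r_of_neq0.
have E1 := FC_good a good1.
have E2 := FC_good a good2.
have ppos x : pX x != 0%R -> (0 < pX x)%R by move=> px; rewrite lt_neqAle eq_sym px p0.
have H4 : FC a pX pYX qk1 rk <= augustin_csiszar_MI a pX pYX.
  rewrite E1; apply: le_ereal_inf_tmp => _ [Q [Q0 Q1] <-].
  have [/existsP[x /existsP[y /andP[/andP[px Wy] /eqP Qy]]]|Hn] :=
     boolP [exists x, exists y, (0 < pX x)%R && (0 < pYX x y)%R && (Q y == 0%R)].
    have -> : \sum_x (pX x)%:E * renyi_div a (pYX x) Q = +oo.
      apply/eqP; rewrite esum_eqy.
        apply/existsP; exists x; rewrite /renyi_div asboolT; last by exists y.
        by rewrite gt0_muley.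
      move=> x' _; rewrite /renyi_div; case: asboolP => _ //.
      have [->|px'] := eqVneq (pX x') 0%R; first by rewrite mul0e.
      by rewrite gt0_muley // lte_fin ppos.
    exact: leey.
  have WQ x y : (0 < pX x)%R -> (0 < pYX x y)%R -> (0 < Q y)%R.
    move=> px Wy; rewrite lt_neqAle Q0 andbT eq_sym; apply/negP => /eqP Qy.
    move/negP: Hn; apply; apply/existsP; exists x; apply/existsP; exists y.
    by rewrite px Wy Qy eqxx.
  rewrite (eq_bigr (fun x => (pX x * ((a - 1)^-1 * ln (\sum_y pYX x y `^ a * Q y `^ (1 - a))))%R%:E)); last first.
    move=> x _; have [->|px] := eqVneq (pX x) 0%R; first by rewrite mul0e mul0r.
    rewrite /renyi_div asboolF // => -[y [Wy Qy]].
    by move: (WQ x y (ppos x px) Wy); rewrite Qy ltxx.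
  rewrite sumEFin lee_fin.
  apply: sum_A_D => //.
  - move=> x px; by have [] := Hqk1 x px.
  - by move=> x y px qy; apply: good1 => //; rewrite gt_eqF.
have H1 : FC a pX pYX qk rk <= FC a pX pYX qk1 rk.
  have [/existsP[x /existsP[y /andP[/andP[px qy] /eqP Wy]]]|Hn] :=
     boolP [exists x, exists y, (pX x != 0%R) && (qk x y != 0%R) && (pYX x y == 0%R)].
    by rewrite (FC_bad rk a1 px qy Wy) leNye.
  have good0 x y : pX x != 0%R -> qk x y != 0%R -> pYX x y != 0%R /\ rk x y != 0%R.
    move=> px qy; split; last exact: r_of_neq0.
    apply/negP => /eqP Wy; move/negP: Hn; apply; apply/existsP; exists x; apply/existsP; exists y.
    by rewrite px qy Wy eqxx.
  rewrite (FC_good a good0) E1 lee_fin; apply: ler_sum => x _.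
  have [->|px] := eqVneq (pX x) 0%R; first by rewrite !mul0r.
  rewrite ler_pM2l ?ppos // qk1E.
  have [qs _] := Hqk x (ppos x px).
  apply: A_qstep => //; first exact: ppos.
    by move=> y qy; apply: good0.
  exact: (Z_pos a p0 W0 Ik (ppos x px)).
split => //.
- rewrite E1 E2 lee_fin; apply: sum_A_rstep => //.
  by move=> x y px qy; have [] := good1 x y px qy.
- exact: le_trans H1 H4.
Qed.
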